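(* Let $\Omega$ be a topological space. Suppose either (a) $\mathcal{A}$ is an algebra of continuous real-valued functions on $\Omega$, closed in the compact-open topology and containing all constants; or (b) $\mathcal{B}$ is a complex algebra of continuous complex-valued functions on $\Omega$, closed in the compact-open topology and containing all constants, and $\mathcal{A}=\{\mathrm{Re}\,b\mid b\in\mathcal{B}\}$. Let $\mathcal{F}$ be the complete lattice cone generated by $\mathcal{A}$. Then for every compact $K\subset\Omega$ and every $C\geq1$, $$\mathrm{clConv}_{\mathcal{F}}K=\{\omega\in\Omega\mid a(\omega)\leq C\sup_K|a|\text{ for all }a\in\mathcal{A}\}.$$ Moreover, in case (b) these sets also coincide with $\{\omega\in\Omega\mid |b(\omega)|\leq C\sup_K|b|\text{ for all }b\in\mathcal{B}\}$.
   Context: The complete lattice cone generated by $\mathcal{A}$ is the smallest set of functions $\Omega\to(-\infty,\infty]$ containing $\mathcal{A}$, closed under nonnegative linear combinations and pointwise suprema of arbitrary families. $\mathrm{clConv}_{\mathcal{F}}K=\{\omega\in\Omega\mid f(\omega)\leq\sup f(K)\text{ for all }f\in\mathcal{F}\}$. The compact-open topology is given by the seminorms $\sup_K|\cdot|$, $K$ compact. *)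

(* Defs.v *)
From HB Require Import structures.
From mathcomp Require Import all_boot all_order all_algebra.
From mathcomp Require Import all_classical all_reals all_analysis.
From mathcomp Require Import complex.
Export numFieldTopology.Exports numFieldNormedType.Exports.
Import Order.TTheory GRing.Theory Num.Theory.

Set Implicit Arguments.
Unset Strict Implicit.
Unset Printing Implicit Defensive.

Local Open Scope classical_set_scope.
Local Open Scope ring_scope.

Definition cplx (R : realType) : numClosedFieldType := R[i].

Definition cmod (R : realType) (z : cplx R) : R := ComplexField.Normc.normc z.

Definition closed_real_function_algebra (R : realType) (Omega : topologicalType)
  (A : set (Omega -> R)) : Prop :=
  (forall a, A a -> continuous a) /\
  (forall c : R, A (fun _ => c)) /\
  (forall a b, A a -> A b -> A (fun w => a w + b w)) /\
  (forall a b, A a -> A b -> A (fun w => a w * b w)) /\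
  (forall (c : R) a, A a -> A (fun w => c * a w)) /\
      (* closed for the compact-open topology (seminorms sup_K |.|) *)
      (forall f : Omega -> R, continuous f ->
         (forall K, compact K -> forall eps : R, 0 < eps ->
            exists2 a, A a & forall x, K x -> `|f x - a x| < eps) ->
         A f).

Definition closed_complex_function_algebra (R : realType) (Omega : topologicalType)
  (B : set (Omega -> cplx R)) : Prop :=
  (forall b, B b -> continuous b) /\
  (forall c : cplx R, B (fun _ => c)) /\
  (forall a b, B a -> B b -> B (fun w => a w + b w)) /\
  (forall a b, B a -> B b -> B (fun w => a w * b w)) /\
  (forall (c : cplx R) a, B a -> B (fun w => c * a w)) /\
      (forall f : Omega -> cplx R, continuous f ->
         (forall K, compact K -> forall eps : R, 0 < eps ->
            exists2 a, B a & forall x, K x -> cmod (f x - a x) < eps) ->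
         B f).

Definition real_parts (R : realType) (Omega : Type) (B : set (Omega -> cplx R))
  : set (Omega -> R) :=
  [set fun w => complex.Re (b w) | b in B].

Local Open Scope ereal_scope.

Definition lattice_cone_closed (R : realType) (Omega : Type)
  (S : set (Omega -> \bar R)) : Prop :=
  [/\ (forall f g, S f -> S g -> S (fun w => f w + g w)),
      (forall (c : R) f, (0 <= c)%R -> S f -> S (fun w => c%:E * f w)) &
      (forall G : set (Omega -> \bar R), G !=set0 -> G `<=` S ->
         S (fun w => ereal_sup [set g w | g in G]))].

Definition complete_lattice_cone (R : realType) (Omega : Type)
  (A : set (Omega -> R)) : set (Omega -> \bar R) :=
  [set f | forall S : set (Omega -> \bar R),
     (forall w, S w -> forall x, w x != -oo) ->
     (forall a, A a -> S (fun w => (a w)%:E)) ->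
     lattice_cone_closed S -> S f].

Definition clConv (R : realType) (Omega : Type) (F : set (Omega -> \bar R))
  (K : set Omega) : set Omega :=
  [set w | forall f, F f -> f w <= ereal_sup (f @` K)].

Definition supnorm_on (R : realType) (Omega : Type) (K : set Omega)
  (a : Omega -> R) : \bar R :=
  ereal_sup [set `|a x|%:E | x in K].

Definition csupnorm_on (R : realType) (Omega : Type) (K : set Omega)
  (b : Omega -> cplx R) : \bar R :=
  ereal_sup [set (cmod (b x))%:E | x in K].

(* Main.v *)
Require Import Defs.
From HB Require Import structures.
From mathcomp Require Import all_boot all_order all_algebra.
From mathcomp Require Import all_classical all_reals all_analysis.
From mathcomp Require Import complex.
From mathcomp Require Import ring lra.
Import numFieldTopology.Exports numFieldNormedType.Exports.
Import Order.TTheory GRing.Theory Num.Theory.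
Set Implicit Arguments.
Unset Strict Implicit.
Local Open Scope classical_set_scope.
Local Open Scope ring_scope.
Local Open Scope complex_scope.
Lemma bernoulli_ineq (R : realType) (q : R) (n : nat) : 1 <= q ->
  1 + n%:R * (q - 1) <= q ^+ n.
Proof.
move=> q1; elim: n => [|n IH]; first by rewrite mul0r addr0 expr0.
rewrite exprS.
have h : q * (1 + n%:R * (q - 1)) <= q * q ^+ n.
  by rewrite ler_wpM2l // (le_trans _ q1).
apply: le_trans h; rewrite -natr1.
have : 0 <= n%:R * (q - 1) * (q - 1) :> R.
  by rewrite mulr_ge0 // ?mulr_ge0 // subr_ge0.
nra.
Qed.

Lemma power_lemma (R : realType) (x s C : R) : 0 <= x -> 0 <= s ->
  (forall n : nat, x ^+ n.+1 <= C * s ^+ n.+1) -> x <= s.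
Proof.
move=> x0 s0 H; rewrite leNgt; apply/negP => sx.
have [s00|sp] := eqVneq s 0.
  by move: (H 0%N); rewrite s00 expr1 expr1 mulr0 => h; move: sx; rewrite s00 ltNge h.
have sp' : 0 < s by rewrite lt_neqAle eq_sym sp s0.
set q := x / s.
have q1 : 1 < q by rewrite /q ltr_pdivlMr // mul1r.
have Hq : forall n, q ^+ n.+1 <= C.
  move=> n; rewrite /q expr_div_n ler_pdivrMr ?exprn_gt0 //; exact: H.
set m := (Num.truncn (C / (q - 1))).
have hm := truncnS_gt (C / (q - 1)).
have hb := @bernoulli_ineq R q m.+1 (ltW q1).
have := Hq m.
have q10 : 0 < q - 1 by rewrite subr_gt0.
move: hm; rewrite ltr_pdivrMr // => hm.
move=> hq; have : C < q ^+ m.+1.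
  apply: lt_le_trans hb; apply: (lt_le_trans hm); lra.
by rewrite ltNge hq.
Qed.
Lemma real_bound (R : realType) (T : topologicalType) (f : T -> R) (K : set T) :
  continuous f -> compact K -> exists M : R, forall x, K x -> `|f x| <= M.
Proof.
move=> fc cK.
have /compact_bounded [M [_ HM]] := continuous_compact (continuous_subspaceT fc) cK.
exists (M + 1) => x Kx; apply: (HM (M + 1)); first by rewrite ltrDl.
by exists x.
Qed.

Lemma Re_continuous (R : realType) : continuous (fun z : cplx R => complex.Re z).
Proof.
move=> z; apply/(@cvgrPdist_lt _ R _ (nbhs z) (@nbhs_filter (cplx R) z)) => e e0 /=.
have e0' : 0 < e%:C :> cplx R by rewrite ltcR.
have : \forall t \near z, `|z - t| < e%:C.
  by apply: (@cvgrPdist_lt _ (cplx R) (cplx R) (nbhs z) (@nbhs_filter (cplx R) z) id z).1.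
apply: filterS => t; rewrite normc_def ltcR.
apply: le_lt_trans.
case: z {e0'} => a b; case: t => c d /=.
rewrite -sqrtr_sqr; apply: ler_wsqrtr.
by rewrite lerDl sqr_ge0.
Qed.

Lemma cmodE (R : realType) (a b : R) : cmod ((a +i* b) : cplx R) = Num.sqrt (a ^+ 2 + b ^+ 2).
Proof. by []. Qed.

Lemma cmod_ge0 (R : realType) (z : cplx R) : 0 <= cmod z.
Proof. by case: z => a b; rewrite cmodE sqrtr_ge0. Qed.

Lemma cplx_bound (R : realType) (T : topologicalType) (b : T -> cplx R) (K : set T) :
  continuous b -> compact K -> exists M : R, forall x, K x -> cmod (b x) <= M.
Proof.
move=> bc cK.
have nc : continuous (fun x => complex.Re (`|b x|)).
  move=> x; apply: (@continuous_comp _ _ _ (fun x => `|b x|) (fun z : cplx R => complex.Re z)).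
    apply: (@continuous_comp _ _ _ b (fun z : cplx R => `|z|)); first exact: bc.
    exact: norm_continuous.
  exact: Re_continuous.
have [M HM] := @real_bound R T _ K nc cK.
exists M => x Kx; apply: le_trans (HM x Kx).
have -> : complex.Re `|b x| = cmod (b x).
  by case: (b x) => a c; rewrite normc_def /=.
exact: ler_norm.
Qed.

Lemma ReD (R : realType) (z1 z2 : cplx R) : complex.Re (z1 + z2) = complex.Re z1 + complex.Re z2.
Proof. by case: z1 => a b; case: z2 => c d. Qed.

Lemma ReC (R : realType) (c : R) : complex.Re (c%:C : cplx R) = c.
Proof. by []. Qed.

Lemma ReMr (R : realType) (c : R) (z : cplx R) : complex.Re (c%:C * z) = c * complex.Re z.
Proof. by case: z => a b /=; rewrite mul0r subr0. Qed.

Lemma cmodM (R : realType) (z1 z2 : cplx R) : cmod (z1 * z2) = cmod z1 * cmod z2.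
Proof. exact: ComplexField.Normc.normcM. Qed.

Lemma cmodX (R : realType) (z : cplx R) n : cmod (z ^+ n) = cmod z ^+ n.
Proof.
elim: n => [|n IH]; first by rewrite !expr0; exact: ComplexField.Normc.normc1.
by rewrite !exprS cmodM IH.
Qed.

Lemma rot (R : realType) (z : cplx R) : exists c : cplx R,
  complex.Re (c * z) = cmod z /\ forall w, `|complex.Re (c * w)| <= cmod w.
Proof.
case: z => a b.
have [n0|np] := eqVneq (a ^+ 2 + b ^+ 2) 0.
  have a0 : a = 0 by nra.
  have b0 : b = 0 by nra.
  exists 1; rewrite cmodE n0 sqrtr0 a0 b0 mul1r; split => // w.
  rewrite mul1r; case: w => p q; rewrite cmodE -sqrtr_sqr ler_wsqrtr //=.
  by rewrite lerDl sqr_ge0.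
have hp : 0 < a ^+ 2 + b ^+ 2 by rewrite lt_neqAle eq_sym np addr_ge0 ?sqr_ge0.
set n := Num.sqrt (a ^+ 2 + b ^+ 2).
have n0 : 0 < n by rewrite sqrtr_gt0.
have nn : n ^+ 2 = a ^+ 2 + b ^+ 2 by rewrite sqr_sqrtr // ltW.
exists ((a / n) +i* (- (b / n))); split.
  rewrite /= -/n.
  have -> : a / n * a - - (b / n) * b = (a ^+ 2 + b ^+ 2) / n by rewrite !expr2; field; rewrite gt_eqF.
  by rewrite -nn expr2 mulfK // gt_eqF.
case=> p q /=; rewrite -sqrtr_sqr ler_sqrt ?addr_ge0 ?sqr_ge0 //.
have h1 : (a / n) ^+ 2 + (b / n) ^+ 2 = 1.
  by rewrite !expr_div_n -mulrDl -nn divff // gt_eqF // exprn_gt0.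
set al := a / n in h1 *; set be := b / n in h1 *.
have : 0 <= (al * q - be * p) ^+ 2 by exact: sqr_ge0.
have e : (al * p - - be * q) ^+ 2 + (al * q - be * p) ^+ 2 = (al ^+ 2 + be ^+ 2) * (p ^+ 2 + q ^+ 2).
  by rewrite !expr2; ring.
rewrite h1 mul1r in e; rewrite -e lerDl; exact.
Qed.

Lemma pow_closed (T : Type) (V : comNzRingType) (A : set (T -> V)) :
  A (fun _ => 1) -> (forall a b, A a -> A b -> A (fun w => a w * b w)) ->
  forall f, A f -> forall n, A (fun w => f w ^+ n).
Proof.
move=> A1 AM f Af; elim=> [|n IH].
  by have -> : (fun w => f w ^+ 0) = (fun _ => 1) by apply/funext => w; rewrite expr0.
have -> : (fun w => f w ^+ n.+1) = (fun w => f w * f w ^+ n) by apply/funext => w; rewrite exprS.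
exact: AM.
Qed.

Lemma pow_le (R : realType) (x y : R) n : 0 <= x -> x <= y -> x ^+ n <= y ^+ n.
Proof. by move=> x0 xy; apply: lerXn2r; rewrite ?nnegrE // (le_trans x0 xy). Qed.

Lemma sqrt_le_sq (R : realType) (x M : R) : 0 <= x -> Num.sqrt x <= M -> x <= M ^+ 2.
Proof.
move=> x0 h; rewrite -(sqr_sqrtr x0); apply: pow_le => //; exact: sqrtr_ge0.
Qed.
Local Open Scope ereal_scope.

Lemma ereal_split (R : realType) (x y : \bar R) (r : R) :
  x != -oo -> y != -oo -> r%:E < x + y ->
  exists r1 r2 : R, [/\ r1%:E < x, r2%:E < y & r = (r1 + r2)%R].
Proof.
case: x => [a| |] // _; case: y => [b| |] // _ /=.
- rewrite -EFinD lte_fin => h.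
  exists (a - (a + b - r) / 2)%R, (b - (a + b - r) / 2)%R; split;
    rewrite ?lte_fin; lra.
- move=> _; exists (a - 1)%R, (r - a + 1)%R; split; rewrite ?lte_fin ?ltry //; lra.
- move=> _; exists (r - b + 1)%R, (b - 1)%R; split; rewrite ?lte_fin ?ltry //; lra.
- move=> _; exists 0%R, r; split; rewrite ?ltry //; lra.
Qed.

Lemma ereal_le_reals (R : realType) (x y : \bar R) :
  (forall r : R, r%:E < x -> r%:E <= y) -> x <= y.
Proof.
case: x => [a| |] H; last by rewrite leNye.
- case: y H => [b| |] H; last 2 first.
  + by rewrite leey.
  + have : ((a - 1)%R)%:E < a%:E by rewrite lte_fin; lra.
    by move=> /H; rewrite leNgt ltNye.
  rewrite lee_fin leNgt; apply/negP => ba.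
  have := H ((a + b) / 2)%R; rewrite lte_fin lee_fin => /(_ ltac:(lra)) h; lra.
- case: y H => [b| |] H; last 2 first.
  + by rewrite leey.
  + by have := H 0%R (ltry _); rewrite leNgt ltNye.
  by have := H (b + 1)%R (ltry _); rewrite lee_fin => h; exfalso; lra.
Qed.

Lemma cone_bound (R : realType) (T : Type) (A : set (T -> R)) (K : set T) (w : T) :
  (forall c : R, A (fun _ => c)) ->
  (forall a b, A a -> A b -> A (fun x => (a x + b x)%R)) ->
  (forall (c : R) a, (0 < c)%R -> A a -> A (fun x => (c * a x)%R)) ->
  (forall a, A a -> forall u : R, (forall x, K x -> (a x <= u)%R) -> (a w <= u)%R) ->
  forall f, complete_lattice_cone A f -> f w <= ereal_sup (f @` K).
Proof.
move=> Acst Aadd Ascal Akey f Hf.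
pose S := [set g : T -> \bar R | (forall x, g x != -oo) /\
  forall r : R, r%:E < g w -> exists2 a, A a &
     (forall x, K x -> (a x)%:E <= g x) /\ (r < a w)%R].
have [_ Sf] : S f.
  apply: Hf.
  - by move=> g [].
  - move=> a Aa; split; first by [].
    move=> r rlt; exists a => //; split => //.
  split.
  - move=> g h [gN Hg] [hN Hh]; split.
      by move=> x; rewrite adde_eq_ninfty negb_or gN hN.
    move=> r /(@ereal_split R _ _ r (gN w) (hN w)) [r1 [r2 [h1 h2 ->]]].
    have [a Aa [a1 a2]] := Hg _ h1; have [b Ab [b1 b2]] := Hh _ h2.
    exists (fun x => a x + b x)%R; first exact: Aadd.
    split; last by rewrite ltrD.
    by move=> x Kx; rewrite EFinD leeD // ?a1 ?b1.
  - move=> c g c0 [gN Hg]; have [c00|cp] := eqVneq c 0%R.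
      split; first by move=> x; rewrite c00 mul0e.
      move=> r; rewrite c00 mul0e lte_fin => r0.
      exists (fun _ => 0%R) => //; split => // x _; by rewrite mul0e.
    have cp' : (0 < c)%R by rewrite lt_neqAle eq_sym cp c0.
    split.
      move=> x; case: (g x) (gN x) => [y| |] //= _; by rewrite mulr_infty gtr0_sg // mul1e.
    move=> r rlt.
    have : (r / c)%:E < g w.
      case: (g w) rlt (gN w) => [y| |] //=; last by rewrite ltry.
      by move=> h _; move: h; rewrite -EFinM !lte_fin ltr_pdivrMr // mulrC.
    move=> /Hg [a Aa [a1 a2]]; exists (fun x => c * a x)%R; first exact: Ascal.
    split; last by move: a2; rewrite ltr_pdivrMr // mulrC.
    by move=> x Kx; rewrite EFinM lee_pmul2l ?lte_fin // a1.
  - move=> G G0 GS; split.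
      move=> x; case: G0 => g Gg; apply/negP => /eqP h.
      have := ereal_sup_ubound (ex_intro2 _ _ g Gg erefl : [set g0 x | g0 in G] (g x)).
      by rewrite h leeNy_eq; apply/negP; have [] := GS g Gg.
    move=> r /ereal_sup_gt [_ [g Gg <-]] rg.
    have [_ Hg] := GS g Gg; have [a Aa [a1 a2]] := Hg r rg.
    exists a => //; split => // x Kx; apply: (le_trans (a1 x Kx)).
    by apply: ereal_sup_ubound; exists g.
apply: ereal_le_reals => r /Sf [a Aa [a1 a2]].
rewrite leNgt; apply/negP => supr.
have : (a w <= r)%R.
  apply: Akey => // x Kx; rewrite -lee_fin; apply/ltW.
  apply: le_lt_trans supr; apply: (le_trans (a1 x Kx)).
  by apply: ereal_sup_ubound; exists x.
by rewrite leNgt a2.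
Qed.

Lemma cone_incl (R : realType) (T : Type) (A : set (T -> R)) a :
  A a -> complete_lattice_cone A (fun w => (a w)%:E).
Proof. by move=> Aa S _ HA _; exact: HA. Qed.

Lemma clConv_ne (R : realType) (T : Type) (A : set (T -> R)) (K : set T) w :
  A (fun _ => 0%R) -> clConv (complete_lattice_cone A) K w -> exists x, K x.
Proof.
move=> A0 H; have := H _ (cone_incl A0).
case: (pselect (exists x, K x)) => // nK.
have -> : K = set0 by apply/seteqP; split => x // Kx; exfalso; apply: nK; exists x.
by rewrite image_set0 ereal_sup0 leeNy_eq.
Qed.

Lemma clConv_sub1 (R : realType) (T : Type) (A : set (T -> R)) (K : set T) (C : R) w :
  A (fun _ => 0%R) -> (1 <= C)%R -> clConv (complete_lattice_cone A) K w ->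
  forall a, A a -> (a w)%:E <= C%:E * supnorm_on K a.
Proof.
move=> A0 C1 H a Aa.
have [x0 Kx0] := clConv_ne A0 H.
have h := H _ (cone_incl Aa).
have hs : ereal_sup [set (a x)%:E | x in K] <= supnorm_on K a.
  apply: ge_ereal_sup => y [x Kx <-].
  apply: (@le_trans _ _ (`|a x|%:E)); first by rewrite lee_fin ler_norm.
  by apply: ereal_sup_ubound; exists x.
apply: (le_trans h); apply: (le_trans hs); apply: lee_pemull; last by rewrite lee_fin.
apply: (@le_trans _ _ (`|a x0|%:E)); first by rewrite lee_fin.
by apply: ereal_sup_ubound; exists x0.
Qed.

Lemma ub_of (R : realType) (T : Type) (A : set (T -> R)) (K : set T) (C : R) w :
  (0 <= C)%R -> (forall a, A a -> (a w)%:E <= C%:E * supnorm_on K a) ->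
  forall a, A a -> forall v : R, (forall x, K x -> `|a x| <= v)%R -> (a w <= C * v)%R.
Proof.
move=> C0 H a Aa v Hv; rewrite -lee_fin EFinM; apply: le_trans (H a Aa) _.
apply: lee_wpmul2l; first by rewrite lee_fin.
by apply: ge_ereal_sup => y [x Kx <-]; rewrite lee_fin; exact: Hv.
Qed.

Lemma cub_of (R : realType) (T : Type) (B : set (T -> cplx R)) (K : set T) (C : R) w :
  (0 <= C)%R -> (forall b, B b -> (cmod (b w))%:E <= C%:E * csupnorm_on K b) ->
  forall b, B b -> forall v : R, (forall x, K x -> cmod (b x) <= v)%R -> (cmod (b w) <= C * v)%R.
Proof.
move=> C0 H a Aa v Hv; rewrite -lee_fin EFinM; apply: le_trans (H a Aa) _.
apply: lee_wpmul2l; first by rewrite lee_fin.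
by apply: ge_ereal_sup => y [x Kx <-]; rewrite lee_fin; exact: Hv.
Qed.

Lemma ne_of_ub (R : realType) (T : Type) (A : set (T -> R)) (K : set T) (C : R) w :
  A (fun _ => 1%R) ->
  (forall a, A a -> forall v : R, (forall x, K x -> `|a x| <= v)%R -> (a w <= C * v)%R) ->
  exists x, K x.
Proof.
move=> A1 H; case: (pselect (exists x, K x)) => // nK; exfalso.
have : (1 <= C * 0)%R by apply: (H _ A1) => x Kx; exfalso; apply: nK; exists x.
by rewrite mulr0 ler10.
Qed.

Lemma ne_of_cub (R : realType) (T : Type) (B : set (T -> cplx R)) (K : set T) (C : R) w :
  B (fun _ => 1%R) ->
  (forall b, B b -> forall v : R, (forall x, K x -> cmod (b x) <= v)%R -> (cmod (b w) <= C * v)%R) ->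
  exists x, K x.
Proof.
move=> B1 H; case: (pselect (exists x, K x)) => // nK; exfalso.
have : (cmod (1 : cplx R) <= C * 0)%R by apply: (H _ B1) => x Kx; exfalso; apply: nK; exists x.
by rewrite mulr0 /cmod ComplexField.Normc.normc1 ler10.
Qed.

Lemma caseA (R : realType) (Omega : topologicalType) (A : set (Omega -> R)) :
  closed_real_function_algebra A ->
  forall (K : set Omega) (C : R), compact K -> (1 <= C)%R ->
       clConv (complete_lattice_cone A) K =
       [set w | forall a, A a -> ((a w)%:E <= C%:E * supnorm_on K a)%E].
Proof.
case=> [Acont [Acst [Aadd [Amul [Ascal _]]]]] K C cK C1.
apply/seteqP; split => w /= Hw.
  exact: clConv_sub1.
have C0 : (0 <= C)%R by apply: le_trans C1.
have ub := ub_of C0 Hw.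
have [x0 Kx0] := ne_of_ub (Acst 1%R) ub.
move=> f Hf; apply: (cone_bound Acst Aadd _ _ Hf).
  by move=> c a _ Aa; exact: Ascal.
move=> a Aa u Hu.
have [M HM] := real_bound (Acont a Aa) cK.
pose b := fun x => (a x + M)%R.
have Ab : A b by exact: (Aadd _ _ Aa (Acst M)).
have hx0 : (- M <= a x0)%R by have := HM x0 Kx0; rewrite ler_norml => /andP[].
have u0 : (0 <= u + M)%R by have := Hu x0 Kx0; lra.
have [bw|bw] := ltP (b w) 0%R; first by rewrite /b in bw; lra.
have : (b w <= u + M)%R.
  apply: power_lemma bw u0 _ => n.
  have Abn := pow_closed (Acst 1%R) Amul Ab n.+1.
  apply: (ub _ Abn) => x Kx /=.
  have hb : (0 <= b x)%R by have := HM x Kx; rewrite ler_norml /b => /andP[h _]; lra.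
  rewrite ger0_norm ?exprn_ge0 //; apply: pow_le => //.
  by have := Hu x Kx; rewrite /b; lra.
by rewrite /b; lra.
Qed.


Lemma RE_closed (R : realType) (T : Type) (B : set (T -> cplx R)) :
  (forall c : cplx R, B (fun _ => c)) ->
  (forall a b, B a -> B b -> B (fun w => a w + b w)%R) ->
  (forall (c : cplx R) a, B a -> B (fun w => c * a w)%R) ->
  [/\ (forall c : R, real_parts B (fun _ => c)),
      (forall a b, real_parts B a -> real_parts B b -> real_parts B (fun x => (a x + b x)%R)) &
      (forall (c : R) a, (0 < c)%R -> real_parts B a -> real_parts B (fun x => (c * a x)%R))].
Proof.
move=> Bcst Badd Bscal; split.
- by move=> c; exists (fun _ => c%:C).
- move=> _ _ [b1 Bb1 <-] [b2 Bb2 <-]; exists (fun w => b1 w + b2 w)%R; first exact: Badd.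
  by apply/funext => x; rewrite ReD.
- move=> c _ _ [b Bb <-]; exists (fun w => c%:C * b w)%R; first exact: Bscal.
  by apply/funext => x; rewrite ReMr.
Qed.

Lemma keyRe (R : realType) (T : topologicalType) (B : set (T -> cplx R)) (K : set T) w x0 :
  (forall b, B b -> continuous b) ->
  (forall c : cplx R, B (fun _ => c)) ->
  (forall a b, B a -> B b -> B (fun w => a w + b w)%R) ->
  compact K -> K x0 ->
  (forall b, B b -> forall v : R, (forall x, K x -> cmod (b x) <= v)%R -> (cmod (b w) <= v)%R) ->
  forall a, real_parts B a -> forall u : R, (forall x, K x -> a x <= u)%R -> (a w <= u)%R.
Proof.
move=> Bcont Bcst Badd cK Kx0 Q1 _ [b Bb <-] u Hu /=.
have [M HM] := cplx_bound (Bcont b Bb) cK.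
have M0 : (0 <= M)%R by apply: le_trans (HM x0 Kx0); exact: cmod_ge0.
rewrite leNgt; apply/negP => uw.
set d := (complex.Re (b w) - u)%R.
have d0 : (0 < d)%R by rewrite /d subr_gt0.
set t := (M ^+ 2 / d + 1)%R.
have td : (t * d = M ^+ 2 + d)%R by rewrite /t mulrDl mul1r mulfVK // gt_eqF.
have t0 : (0 < t)%R by rewrite /t ltr_wpDl // divr_ge0 ?sqr_ge0 // ltW.
pose c := fun x => (b x + t%:C)%R.
have Bc : B c by exact: (Badd _ _ Bb (Bcst t%:C)).
set Q := (M ^+ 2 + 2 * t * u + t ^+ 2)%R.
have Hc : forall x, K x -> ((complex.Re (b x) + t) ^+ 2 + (complex.Im (b x)) ^+ 2 <= Q)%R.
  move=> x Kx; have := HM x Kx; have := Hu x Kx.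
  case: (b x) => p q /= hp; rewrite ?cmodE => /sqrt_le_sq.
  rewrite addr_ge0 ?sqr_ge0 // => /(_ isT) h.
  rewrite /Q; nra.
have Q0 : (0 <= Q)%R by apply: le_trans (Hc x0 Kx0); rewrite addr_ge0 ?sqr_ge0.
have := Q1 _ Bc (Num.sqrt Q) _.
have cE : forall x, cmod (c x) = Num.sqrt ((complex.Re (b x) + t) ^+ 2 + (complex.Im (b x)) ^+ 2).
  by move=> x; rewrite /c; case: (b x) => p q /=; rewrite addr0.
rewrite cE => /(_ _) h.
have : ((complex.Re (b w) + t) ^+ 2 + (complex.Im (b w)) ^+ 2 <= Q)%R.
  rewrite -(ler_sqrt _ Q0); apply: h => x Kx; rewrite cE ler_sqrt //; exact: Hc.
rewrite /Q; move: td; rewrite /d; nra.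
Qed.

Lemma Q1_of_Q2 (R : realType) (T : Type) (B : set (T -> cplx R)) (K : set T) (C : R) w x0 :
  (forall c : cplx R, B (fun _ => c)) ->
  (forall a b, B a -> B b -> B (fun w => a w * b w)%R) -> K x0 ->
  (forall b, B b -> forall v : R, (forall x, K x -> cmod (b x) <= v)%R -> (cmod (b w) <= C * v)%R) ->
  (forall b, B b -> forall v : R, (forall x, K x -> cmod (b x) <= v)%R -> (cmod (b w) <= v)%R).
Proof.
move=> Bcst Bmul Kx0 Q2 b Bb v Hv.
have v0 : (0 <= v)%R by apply: le_trans (Hv x0 Kx0); exact: cmod_ge0.
apply: power_lemma (cmod_ge0 _) v0 _ => n.
have Bbn := pow_closed (Bcst 1%R) Bmul Bb n.+1.
rewrite -cmodX; apply: (Q2 _ Bbn) => x Kx /=.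
by rewrite cmodX; apply: pow_le; [exact: cmod_ge0 | exact: Hv].
Qed.

Lemma Q2_of_P1 (R : realType) (T : Type) (B : set (T -> cplx R)) (K : set T) (C : R) w :
  (forall (c : cplx R) a, B a -> B (fun w => c * a w)%R) ->
  (forall a, real_parts B a -> forall v : R, (forall x, K x -> `|a x| <= v)%R -> (a w <= C * v)%R) ->
  (forall b, B b -> forall v : R, (forall x, K x -> cmod (b x) <= v)%R -> (cmod (b w) <= C * v)%R).
Proof.
move=> Bscal P1 b Bb v Hv.
have [c [hc1 hc2]] := rot (b w).
rewrite -hc1.
have : real_parts B (fun x => complex.Re (c * b x)%R).
  by exists (fun x => c * b x)%R => //; exact: Bscal.
move=> /P1; apply => x Kx; apply: le_trans (hc2 _) (Hv x Kx).
Qed.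

Lemma P2_of_P0 (R : realType) (T : Type) (B : set (T -> cplx R)) (K : set T) (C : R) w :
  (forall c : cplx R, B (fun _ => c)) ->
  (forall (c : cplx R) a, B a -> B (fun w => c * a w)%R) -> (1 <= C)%R ->
  clConv (complete_lattice_cone (real_parts B)) K w ->
  forall b, B b -> (cmod (b w))%:E <= C%:E * csupnorm_on K b.
Proof.
move=> Bcst Bscal C1 H b Bb.
have RE0 : real_parts B (fun _ => 0%R) by exists (fun _ => 0%R).
have [x0 Kx0] := clConv_ne RE0 H.
have [c [hc1 hc2]] := rot (b w).
have Ra : real_parts B (fun x => complex.Re (c * b x)%R).
  by exists (fun x => c * b x)%R => //; exact: Bscal.
have h := H _ (cone_incl Ra).
rewrite -hc1.
have hs : ereal_sup [set (complex.Re (c * b x)%R)%:E | x in K] <= csupnorm_on K b.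
  apply: ge_ereal_sup => y [x Kx <-].
  apply: (@le_trans _ _ ((cmod (b x))%:E)).
    by rewrite lee_fin; apply: le_trans (hc2 _); exact: ler_norm.
  by apply: ereal_sup_ubound; exists x.
apply: (le_trans h); apply: (le_trans hs); apply: lee_pemull; last by rewrite lee_fin.
apply: (@le_trans _ _ ((cmod (b x0))%:E)); first by rewrite lee_fin cmod_ge0.
by apply: ereal_sup_ubound; exists x0.
Qed.

Lemma caseB (R : realType) (Omega : topologicalType) (B : set (Omega -> cplx R)) :
  closed_complex_function_algebra B ->
     forall (K : set Omega) (C : R), compact K -> (1 <= C)%R ->
       clConv (complete_lattice_cone (real_parts B)) K =
       [set w | forall a, real_parts B a -> ((a w)%:E <= C%:E * supnorm_on K a)%E]
     /\
       clConv (complete_lattice_cone (real_parts B)) K =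
       [set w | forall b, B b -> ((cmod (b w))%:E <= C%:E * csupnorm_on K b)%E].
Proof.
case=> [Bcont [Bcst [Badd [Bmul [Bscal _]]]]] K C cK C1.
have C0 : (0 <= C)%R by apply: le_trans C1.
have [REcst REadd REscal] := RE_closed Bcst Badd Bscal.
have fromQ2 : forall w,
  (forall b, B b -> forall v : R, (forall x, K x -> cmod (b x) <= v)%R -> (cmod (b w) <= C * v)%R) ->
  clConv (complete_lattice_cone (real_parts B)) K w.
  move=> w Q2.
  have [x0 Kx0] := ne_of_cub (Bcst 1%R) Q2.
  have Q1 := Q1_of_Q2 Bcst Bmul Kx0 Q2.
  move=> f Hf; apply: (cone_bound REcst REadd REscal _ Hf).
  exact: (keyRe Bcont Bcst Badd cK Kx0 Q1).
split; apply/seteqP; split => w /= Hw.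
- exact: clConv_sub1 (REcst 0%R) C1 Hw.
- apply: fromQ2; apply: Q2_of_P1 Bscal _; exact: ub_of C0 Hw.
- exact: P2_of_P0 Bcst Bscal C1 Hw.
- apply: fromQ2; exact: cub_of C0 Hw.
Qed.

Local Close Scope ereal_scope.
Local Close Scope complex_scope.
Local Open Scope ring_scope.

Theorem mainTheorem10 (R : realType) (Omega : topologicalType) :
  (* case (a) *)
  (forall A : set (Omega -> R), closed_real_function_algebra A ->
     forall (K : set Omega) (C : R), compact K -> 1 <= C ->
       clConv (complete_lattice_cone A) K =
       [set w | forall a, A a -> ((a w)%:E <= C%:E * supnorm_on K a)%E])
  /\
  (* case (b) *)
  (forall B : set (Omega -> cplx R), closed_complex_function_algebra B ->
     forall (K : set Omega) (C : R), compact K -> 1 <= C ->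
       clConv (complete_lattice_cone (real_parts B)) K =
       [set w | forall a, real_parts B a -> ((a w)%:E <= C%:E * supnorm_on K a)%E]
     /\
       clConv (complete_lattice_cone (real_parts B)) K =
       [set w | forall b, B b -> ((cmod (b w))%:E <= C%:E * csupnorm_on K b)%E]).
Proof.
split; [exact: caseA | exact: caseB].
Qed.
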